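(* Let $N\ge 1$ be an integer and let $q,c,d$ be complex numbers with $q\neq 0$. Then the $N+1$ polynomials $\big(h_k(x;c)\,h_{N-k}(x;d)\big)_{k=0}^N$ form a basis of the space of polynomials in $x$ of degree at most $N$ if and only if none of the following holds: (i) $c,d\neq 0$ and $c/d\in\{q^{1-N},q^{2-N},\dots,q^{N-1}\}$; (ii) $cd\in\{q^{1-N},q^{2-N},\dots,q^{-1},1\}$; (iii) $c=d=0$.
   Context: For a complex number $a$ and integer $k\ge 0$, the Askey–Wilson monomial is the polynomial $h_k(x;a)=h_k(x;a;q)=\prod_{j=0}^{k-1}(1-axq^j+a^2q^{2j})$ (empty product $=1$). Equivalently, if $\xi+\xi^{-1}=x$, then $h_k(x;a)=(a\xi;q)_k(a\xi^{-1};q)_k$, where $(a;q)_k=\prod_{j=0}^{k-1}(1-aq^j)$. *)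

(* Defs.v *)
From HB Require Import structures.
From mathcomp Require Import all_boot all_order all_algebra.
From mathcomp Require Import complex.
From mathcomp Require Import reals.
Set Implicit Arguments. Unset Strict Implicit. Unset Printing Implicit Defensive.
Import Order.TTheory GRing.Theory Num.Theory.
Local Open Scope ring_scope.

Definition aw_monomial (R : realType) (q a : R[i]) (k : nat) : {poly R[i]} :=
  \prod_(j < k) (1 - (a * q ^+ j) *: 'X + (a ^+ 2 * q ^+ (2 * j))%:P).

Definition is_basis_poly_deg_le (F : fieldType) (N : nat)
    (P : 'I_N.+1 -> {poly F}) : Prop :=
  [/\ forall k, (size (P k) <= N.+1)%N,
      forall a : 'I_N.+1 -> F, \sum_(k < N.+1) a k *: P k = 0 -> forall k, a k = 0
    & forall p : {poly F}, (size p <= N.+1)%N ->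
        exists a : 'I_N.+1 -> F, p = \sum_(k < N.+1) a k *: P k].

(* Main.v *)
Require Import Defs.
From HB Require Import structures.
From mathcomp Require Import all_boot all_order all_algebra.
From mathcomp Require Import complex.
From mathcomp Require Import reals.
From mathcomp Require Import ring zify.
Import Order.TTheory GRing.Theory Num.Theory.
Local Open Scope ring_scope.
Set Implicit Arguments. Unset Strict Implicit. Unset Printing Implicit Defensive.

Section Mat.
Variable F : fieldType.

Lemma coef_sumZ n (a : nat -> F) (G : nat -> {poly F}) j :
  (\sum_(k < n) a k *: G k)`_j = \sum_(k < n) a k * (G k)`_j.
Proof. rewrite coef_sum; apply: eq_bigr => k _; by rewrite coefZ. Qed.

Lemma size_sumZ n (a : nat -> F) (G : nat -> {poly F}) m :
  (forall k, (k < n)%N -> (size (G k) <= m)%N) ->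
  (size (\sum_(k < n) a k *: G k)%R <= m)%N.
Proof.
move=> h; elim/big_ind: _ => [|x y hx hy|k _].
- by rewrite size_poly0.
- apply: leq_trans (size_add _ _) _; by rewrite geq_max hx hy.
- apply: leq_trans (size_scale_leq _ _) _; exact: h.
Qed.

Lemma poly_eq_le n (p r : {poly F}) : (size p <= n)%N -> (size r <= n)%N ->
  (forall j, (j < n)%N -> p`_j = r`_j) -> p = r.
Proof.
move=> hp hr h; apply/polyP => j; case: (ltnP j n) => hj; first exact: h.
by rewrite !nth_default // (leq_trans _ hj).
Qed.

Definition SpanG n (G : nat -> {poly F}) :=
  forall p : {poly F}, (size p <= n.+1)%N ->
    exists a : nat -> F, p = \sum_(k < n.+1) a k *: G k.
Definition IndepG n (G : nat -> {poly F}) :=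
  forall a : nat -> F, \sum_(k < n.+1) a k *: G k = 0 ->
    forall k, (k <= n)%N -> a k = 0.

Definition coefM n (G : nat -> {poly F}) : 'M[F]_n.+1 :=
  \matrix_(i, j) (G i)`_j.

Lemma coefM_row n (G : nat -> {poly F}) (a : nat -> F) j :
  ((\row_(k < n.+1) a k) *m coefM n G) 0 j = (\sum_(k < n.+1) a k *: G k)`_j.
Proof. rewrite coef_sumZ !mxE; apply: eq_bigr => k _; by rewrite !mxE. Qed.

Lemma span_indep n (G : nat -> {poly F}) : (forall k, (k <= n)%N -> (size (G k) <= n.+1)%N) ->
  SpanG n G -> IndepG n G.
Proof.
move=> hs hS.
have: forall i : 'I_n.+1, exists a : nat -> F,
   'X^i = \sum_(k < n.+1) a k *: G k.
  move=> i; apply: hS; by rewrite size_polyXn.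
case/fin_all_exists => A hA.
pose B : 'M[F]_n.+1 := \matrix_(i, k) A i k.
have hB : B *m coefM n G = 1%:M.
  apply/matrixP => i j.
  have e := coefM_row G (A i) j.
  rewrite -hA coefXn in e.
  rewrite [RHS]mxE eq_sym -e !mxE; apply: eq_bigr => k _; by rewrite !mxE.
have [_ hu] := mulmx1_unit hB.
move=> a ha k hk.
have hv : (\row_(k < n.+1) a k) *m coefM n G = 0.
  apply/matrixP => i j; rewrite ord1 coefM_row ha mxE; by rewrite coef0.
have := mulmxK hu (\row_(k < n.+1) a k).
rewrite hv mul0mx => /matrixP /(_ 0 (Ordinal (hk : (k < n.+1)%N))).
by rewrite !mxE.
Qed.

Lemma indep_span n (G : nat -> {poly F}) : (forall k, (k <= n)%N -> (size (G k) <= n.+1)%N) ->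
  IndepG n G -> SpanG n G.
Proof.
move=> hs hI.
have hsum : forall a : nat -> F, (size (\sum_(k < n.+1) a k *: G k)%R <= n.+1)%N.
  move=> a; apply: size_sumZ => k hk; exact: hs.
have hu : coefM n G \in unitmx.
  rewrite unitmxE unitfE; apply/negP => /det0P [v hv0 hv].
  pose a := fun k : nat => v 0 (inord k).
  have hr : \row_(k < n.+1) a k = v.
    apply/matrixP => i j; by rewrite ord1 !mxE /a inord_val.
  have h0 : \sum_(k < n.+1) a k *: G k = 0.
    apply: (@poly_eq_le n.+1) => //; first by rewrite size_poly0.
    move=> j hj; have := coefM_row G a (Ordinal hj); rewrite hr hv mxE coef0 /=.
    by move=> <-.
  move/negP: hv0; apply; apply/eqP/matrixP => i j.
  rewrite ord1 mxE -(inord_val j); exact: (hI a h0 j (ltn_ord j)).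
move=> p hp.
pose w := (\row_(j < n.+1) p`_j) *m invmx (coefM n G).
exists (fun k => w 0 (inord k)).
apply: (@poly_eq_le n.+1 p _ hp (hsum (fun k => w 0 (inord k)))) => j hj.
have := coefM_row G (fun k => w 0 (inord k)) (Ordinal hj).
have -> : \row_(k < n.+1) w 0 (inord k) = w.
  apply/matrixP => i l; by rewrite ord1 !mxE inord_val.
by rewrite /w mulmxKV // mxE /= => ->.
Qed.

Definition InSp n (G : nat -> {poly F}) p :=
  exists a : nat -> F, p = \sum_(k < n.+1) a k *: G k.

Lemma sum_ind n (G : nat -> {poly F}) k x : (k <= n)%N ->
  \sum_(j < n.+1) (((j:nat) == k)%:R * x) *: G j = x *: G k.
Proof.
move=> hk; rewrite (bigD1 (Ordinal (hk : (k < n.+1)%N))) //= eqxx mul1r.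
rewrite big1 ?addr0 // => j hj.
rewrite (_ : ((j:nat) == k) = false) ?mul0r ?scale0r //.
apply/negbTE; apply: contra hj => /eqP e; apply/eqP/val_inj; exact e.
Qed.

Lemma InSpG n G k : (k <= n)%N -> InSp n G (G k).
Proof.
move=> hk; exists (fun j => ((j == k)%:R * 1)); by rewrite sum_ind // scale1r.
Qed.

Lemma InSpD n G p r : InSp n G p -> InSp n G r -> InSp n G (p + r).
Proof.
move=> [a ->] [b ->]; exists (fun k => a k + b k).
rewrite -big_split; apply: eq_bigr => k _; by rewrite scalerDl.
Qed.

Lemma InSpZ n G t p : InSp n G p -> InSp n G (t *: p).
Proof.
move=> [a ->]; exists (fun k => t * a k).
rewrite scaler_sumr; apply: eq_bigr => k _; by rewrite scalerA.
Qed.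

Lemma InSp0 n G : InSp n G 0.
Proof. exists (fun _ => 0); rewrite big1 // => k _; by rewrite scale0r. Qed.

Lemma InSpB n G p r : InSp n G p -> InSp n G r -> InSp n G (p - r).
Proof. move=> hp hr; apply: InSpD => //; rewrite -scaleN1r; exact: InSpZ. Qed.

Lemma InSp_sum n G m (P : nat -> {poly F}) :
  (forall k, (k < m)%N -> InSp n G (P k)) -> InSp n G (\sum_(k < m) P k).
Proof.
move=> h; elim/big_ind: _ => [|x y hx hy|k _]; first exact: InSp0.
  exact: InSpD.
exact: h.
Qed.

Lemma dep2 n (G : nat -> {poly F}) i j x y : (i <= n)%N -> (j <= n)%N -> i != j ->
  x *: G i + y *: G j = 0 -> IndepG n G -> x = 0 /\ y = 0.
Proof.
move=> hi hj hij he hI.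
pose a := fun k : nat => ((k == i)%:R * x + (k == j)%:R * y).
have hs : \sum_(k < n.+1) a k *: G k = 0.
  apply: etrans he.
  rewrite -(sum_ind G x hi) -(sum_ind G y hj) -big_split /=.
  apply: eq_bigr => k _; by rewrite /a scalerDl.
have h1 := hI a hs i hi; have h2 := hI a hs j hj.
move: h1 h2; rewrite /a !eqxx (negbTE hij) eq_sym (negbTE hij) /=.
rewrite !mul0r !mul1r add0r addr0 => -> ->; by [].
Qed.

End Mat.
Section HH.
Variable F : fieldType.
Variable q : F.
Hypothesis hq : q != 0.

Definition Lf (a : F) (j : nat) : {poly F} :=
  1 - (a * q ^+ j) *: 'X + (a ^+ 2 * q ^+ (2 * j))%:P.
Definition hh (a : F) (k : nat) : {poly F} := \prod_(j < k) Lf a j.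

Lemma hhS a k : hh a k.+1 = hh a k * Lf a k.
Proof. by rewrite /hh big_ord_recr. Qed.
Lemma hh0 a : hh a 0 = 1.
Proof. by rewrite /hh big_ord0. Qed.

Lemma size_Lf a j : (size (Lf a j) <= 2)%N.
Proof.
rewrite /Lf; apply: leq_trans (size_add _ _) _; rewrite geq_max size_polyC.
rewrite (leq_trans (leq_b1 _)) // andbT.
apply: leq_trans (size_add _ _) _; rewrite geq_max size_poly1 /= size_opp.
by apply: leq_trans (size_scale_leq _ _) _; rewrite size_polyX.
Qed.

Lemma size_hh a k : (size (hh a k) <= k.+1)%N.
Proof.
elim: k => [|k IH]; first by rewrite hh0 size_poly1.
rewrite hhS; apply: leq_trans (size_mul_leq _ _) _.
have := size_Lf a k; lia.
Qed.

Lemma size_Lf_eq a j : a != 0 -> size (Lf a j) = 2%N.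
Proof.
move=> ha; rewrite /Lf.
have hb : - (a * q ^+ j) != 0 by rewrite oppr_eq0 mulf_neq0 // expf_neq0.
have -> : 1 - (a * q ^+ j) *: 'X + (a ^+ 2 * q ^+ (2 * j))%:P =
   (- (a * q ^+ j))%:P * 'X + (1 + a ^+ 2 * q ^+ (2 * j))%:P.
  rewrite mul_polyC scaleNr polyCD polyC1; ring.
by rewrite size_MXaddC polyC_eq0 (negbTE hb) size_polyC hb.
Qed.

Lemma hh_neq0 a k : hh a k != 0.
Proof.
elim: k => [|k IH]; first by rewrite hh0 oner_neq0.
rewrite hhS mulf_neq0 //.
case: (eqVneq a 0) => [->|ha]; last first.
  by apply/eqP => h; move: (size_Lf_eq k ha); rewrite h size_poly0.
by rewrite /Lf !mul0r scale0r subr0 expr0n /= mul0r addr0 oner_neq0.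
Qed.

Lemma size_hh_eq a k : a != 0 -> size (hh a k) = k.+1.
Proof.
move=> ha; elim: k => [|k IH]; first by rewrite hh0 size_poly1.
have hL : Lf a k != 0.
  by apply/eqP => h; move: (size_Lf_eq k ha); rewrite h size_poly0.
by rewrite hhS size_mul ?hh_neq0 // IH size_Lf_eq // addn2.
Qed.

Lemma hh_zero k : hh 0 k = 1.
Proof.
elim: k => [|k IH]; first by rewrite hh0.
by rewrite hhS IH /Lf !mul0r scale0r subr0 expr0n /= mul0r addr0 mulr1.
Qed.


Definition Fam N c d k := hh c k * hh d (N - k).
Definition lam N (c d : F) k := (d * q ^+ (N - k) - c * q ^+ k) * (1 - c * d * q ^+ N).

Lemma alg_ident (P Q : {poly F}) c d u v :
  (d*v) *: (P * (1 - (c*u)*:'X + (c^+2*u^+2)%:P) * Q)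
  - (c*u) *: (P * (Q * (1 - (d*v)*:'X + (d^+2*v^+2)%:P)))
  = ((d*v - c*u)*(1 - c*d*(v*u))) *: (P*Q).
Proof.
rewrite -!mul_polyC !(polyCM, polyCB, polyCD, polyC1, rmorphXn).
ring.
Qed.

Lemma ident N c d k : (k <= N)%N ->
  (d * q ^+ (N - k)) *: Fam N.+1 c d k.+1 - (c * q ^+ k) *: Fam N.+1 c d k
  = lam N c d k *: Fam N c d k.
Proof.
move=> hk; rewrite /Fam /lam subSS subSn // !hhS /Lf.
have hN : q ^+ N = q ^+ (N - k) * q ^+ k by rewrite -exprD subnK.
rewrite hN !(mulnC 2) !exprM.
exact: alg_ident.
Qed.

Lemma size_Fam N c d k : (k <= N)%N -> (size (Fam N c d k) <= N.+1)%N.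
Proof.
move=> hk; rewrite /Fam; apply: leq_trans (size_mul_leq _ _) _.
have := size_hh c k; have := size_hh d (N - k); lia.
Qed.

Lemma span0 c d : SpanG 0 (Fam 0 c d).
Proof.
move=> p hp; exists (fun _ => p`_0).
by rewrite big_ord1 /Fam subnn !hh0 mulr1 alg_polyC -size1_polyC.
Qed.

Lemma span_step N c d : SpanG N (Fam N c d) -> (c != 0) || (d != 0) ->
  (forall k, (k <= N)%N -> lam N c d k != 0) -> SpanG N.+1 (Fam N.+1 c d).
Proof.
move=> hS hcd hl p hp.
have hG : forall k, (k <= N)%N -> InSp N.+1 (Fam N.+1 c d) (Fam N c d k).
  move=> k hk; have e := ident c d hk.
  have -> : Fam N c d k = (lam N c d k)^-1 *:
      ((d * q ^+ (N - k)) *: Fam N.+1 c d k.+1 - (c * q ^+ k) *: Fam N.+1 c d k).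
    by rewrite e scalerA mulVf ?scale1r // hl.
  apply: InSpZ; apply: InSpB; apply: InSpZ; apply: InSpG => //; lia.
have [j [hj hsz]] : exists j, (j <= N.+1)%N /\ size (Fam N.+1 c d j) = N.+2.
  case/orP: hcd => h.
    exists N.+1; split => //; by rewrite /Fam subnn hh0 mulr1 size_hh_eq.
  exists 0%N; split => //; by rewrite /Fam subn0 hh0 mul1r size_hh_eq.
set f := Fam N.+1 c d j in hsz *.
have hf : f != 0 by apply/eqP => e; move: hsz; rewrite e size_poly0.
have hlc : lead_coef f != 0 by rewrite lead_coef_eq0.
set al := p`_N.+1 / lead_coef f.
set r := p - al *: f.
have hr2 : (size r <= N.+2)%N.
  apply: leq_trans (size_add _ _) _; rewrite geq_max hp size_opp.
  by apply: leq_trans (size_scale_leq _ _) _; rewrite hsz.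
have hrc : r`_N.+1 = 0.
  by rewrite /r coefB coefZ -[f`_N.+1]/(f`_(N.+2.-1)) -hsz -lead_coefE /al divfK // subrr.
have hr : (size r <= N.+1)%N.
  rewrite leqNgt; apply/negP => h.
  have e : size r = N.+2 by lia.
  have : lead_coef r = 0 by rewrite lead_coefE e.
  by move/eqP; rewrite lead_coef_eq0 => /eqP e0; move: e; rewrite e0 size_poly0.
have [b hb] := hS r hr.
have hp' : p = r + al *: f by rewrite /r subrK.
rewrite hp'; apply: InSpD; last by apply: InSpZ; apply: InSpG.
rewrite hb; apply: (InSp_sum (P := fun k => b k *: Fam N c d k)) => k hk.
apply: InSpZ; apply: hG; lia.
Qed.

Lemma span_back N c d : SpanG N.+1 (Fam N.+1 c d) ->
  [/\ (c != 0) || (d != 0), (forall k, (k <= N)%N -> lam N c d k != 0)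
    & SpanG N (Fam N c d)].
Proof.
move=> hS.
have hI : IndepG N.+1 (Fam N.+1 c d).
  apply: span_indep => // k hk; exact: size_Fam.
have hcd : (c != 0) || (d != 0).
  apply: contraT; rewrite negb_or !negbK => /andP [/eqP hc /eqP hd].
  have := @dep2 _ N.+1 (Fam N.+1 c d) 0 1 1 (-1) isT isT isT.
  move=> /(_ _ hI); rewrite /Fam hc hd !hh_zero mulr1 scale1r scaleN1r subrr => /(_ erefl).
  by case=> /eqP; rewrite oner_eq0.
have hl : forall k, (k <= N)%N -> lam N c d k != 0.
  move=> k hk; apply/negP => /eqP h0.
  have e := ident c d hk; rewrite h0 scale0r -scaleNr addrC in e.
  have hk1 : (k <= N.+1)%N by lia.
  have hk2 : (k.+1 <= N.+1)%N by lia.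
  have hk3 : k != k.+1 by rewrite neq_ltn ltnSn.
  have [/eqP h1 /eqP h2] := dep2 hk1 hk2 hk3 e hI.
  move: hcd h1 h2; rewrite oppr_eq0 !mulf_eq0 !expf_eq0 (negbTE hq) !andbF !orbF.
  by move=> /orP [/negbTE -> | /negbTE ->].
split => //.
apply: indep_span; first by move=> k hk; exact: size_Fam.
move=> b hb k0 hk0.
pose e := fun k => b k / lam N c d k.
pose a := fun j : nat => (if j is j'.+1 then e j' * (d * q ^+ (N - j')) else 0)
                       - (if (j <= N)%N then e j * (c * q ^+ j) else 0).
have hsum : \sum_(j < N.+2) a j *: Fam N.+1 c d j = \sum_(k < N.+1) b k *: Fam N c d k.
  have -> : \sum_(k < N.+1) b k *: Fam N c d k =
     \sum_(k < N.+1) e k *: ((d * q ^+ (N - k)) *: Fam N.+1 c d k.+1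
                          - (c * q ^+ k) *: Fam N.+1 c d k).
    apply: eq_bigr => k _; rewrite ident; last by rewrite -ltnS.
    by rewrite scalerA /e divfK // hl // -ltnS.
  rewrite /a; under eq_bigr do rewrite scalerBl.
  rewrite sumrB; under [X in _ = X]eq_bigr do rewrite scalerBr !scalerA.
  rewrite [X in _ = X]sumrB.
  congr (_ - _).
    rewrite big_ord_recl /= scale0r add0r; apply: eq_bigr => i _ //.
  rewrite big_ord_recr /= ltnn scale0r addr0; apply: eq_bigr => i _ /=.
  by rewrite -ltnS ltn_ord.
rewrite hb in hsum.
have hz := hI a hsum.
have he : forall k, (k <= N)%N -> e k = 0.
  case: (eqVneq d 0) => [hd0|hd0].
    have hc0 : c != 0 by move: hcd; rewrite hd0 eqxx orbF.
    move=> k hk; have := hz k (leqW hk).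
    rewrite /a hk.
    have -> : (match k with 0%N => 0 | j'.+1 => e j' * (d * q ^+ (N - j')) end) = 0.
      by case: k {hk} => // k; rewrite hd0 mul0r mulr0.
    rewrite sub0r => /eqP; rewrite oppr_eq0 !mulf_eq0 (negbTE hc0) expf_eq0 (negbTE hq).
    rewrite andbF !orbF invr_eq0 (negbTE (hl _ hk)) orbF /e => /eqP ->; by rewrite mul0r.
  have claim : forall m, (m <= N)%N -> e (N - m)%N = 0.
    elim => [|m IH] hm.
      have := hz N.+1 (leqnn _); rewrite /a ltnn subr0 subn0 subnn expr0 mulr1.
      by move/eqP; rewrite mulf_eq0 (negbTE hd0) orbF => /eqP.
    have hj : (N - m.+1).+1 = (N - m)%N by lia.
    have := hz (N - m.+1)%N.+1 (ltac:(lia)); rewrite /a hj IH ?mul0r ?if_same ?subr0; last lia.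
    move/eqP; rewrite !mulf_eq0 (negbTE hd0) expf_eq0 (negbTE hq) andbF !orbF.
    rewrite invr_eq0 (negbTE (hl _ (leq_subr _ _))) orbF => /eqP hb0.
    by rewrite /e hb0 mul0r.
  move=> k hk; rewrite -(subKn hk); apply: claim; lia.
have := he k0 hk0; rewrite /e => /eqP; rewrite mulf_eq0 invr_eq0 (negbTE (hl _ hk0)) orbF.
by move/eqP.
Qed.

Definition Good N c d := forall M, (1 <= M <= N)%N ->
  ((c != 0) || (d != 0)) /\ (forall k, (k < M)%N -> lam M.-1 c d k != 0).

Lemma span_good N c d : SpanG N (Fam N c d) <-> Good N c d.
Proof.
elim: N => [|N IH].
  split=> _; [move=> M /andP [h1 h2]; lia | exact: span0].
split.
  move=> /span_back [hcd hl hS] M /andP [h1 h2].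
  case: (ltnP M N.+1) => hM.
    apply: (proj1 IH hS M); apply/andP; split => //; lia.
  have eM : M = N.+1 by lia.
  subst M; split => // k hk; apply: hl; lia.
move=> hG; apply: span_step.
- apply/IH => M /andP [h1 h2]; apply: hG; apply/andP; split => //; lia.
- by have [] := hG 1%N isT.
- move=> k hk; have [_ h] := hG N.+1 (leqnn _).
  exact: h k (ltac:(lia)).
Qed.

Lemma good_iff N c d : (1 <= N)%N ->
  Good N c d <->
  ~ ( (c != 0 /\ d != 0 /\
        exists i : int, (1 - N%:Z <= i <= N%:Z - 1)%R /\ c / d = q ^ i)
    \/ (exists i : int, (1 - N%:Z <= i <= 0)%R /\ c * d = q ^ i)
    \/ (c = 0 /\ d = 0) ).
Proof.
move=> hN; split.
  move=> hG [[hc [hd [i [hi e]]]] | [[i [hi e]] | [hc hd]]].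
  - case: i hi e => m hi e.
      have hm : (m.+1 <= N)%N by lia.
      have [_ h] := hG m.+1 (ltac:(lia)).
      move: (h 0%N isT); rewrite /lam /= subn0 expr0 mulr1.
      have -> : c = q ^+ m * d by rewrite -[q ^+ m]/(q ^ (Posz m)) -e divfK.
      by rewrite [q ^+ m * d]mulrC subrr mul0r eqxx.
    have hm : (m.+2 <= N)%N by lia.
    have [_ h] := hG m.+2 (ltac:(lia)).
    move: (h m.+1 (ltnSn _)); rewrite /lam /= subnn expr0 mulr1.
    have -> : c = (q ^+ m.+1)^-1 * d by rewrite -[(q ^+ m.+1)^-1]/(q ^ (Negz m)) -e divfK.
    by rewrite mulrAC mulVf ?expf_neq0 // mul1r subrr mul0r eqxx.
  - case: i hi e => m hi e.
      have hm0 : m = 0%N by lia.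
      subst m; have [_ h] := hG 1%N (ltac:(lia)).
      have e1 : c * d = 1 by rewrite e expr0z.
      move: (h 0%N isT); rewrite /lam /= expr0 !mulr1 e1.
      by rewrite subrr mulr0 eqxx.
    have hm : (m.+2 <= N)%N by lia.
    have [_ h] := hG m.+2 (ltac:(lia)).
    move: (h 0%N isT); rewrite /lam /= e /=.
    by rewrite mulVf ?expf_neq0 // subrr mulr0 eqxx.
  - by have [] := hG 1%N (ltac:(lia)); rewrite hc hd eqxx.
move=> hn M /andP [h1 h2]; split.
  apply: contraT; rewrite negb_or !negbK => /andP [/eqP hc /eqP hd].
  by exfalso; apply: hn; right; right.
move=> k hk; apply/negP => /eqP; rewrite /lam => /eqP; rewrite mulf_eq0 !subr_eq0.
case/orP => /eqP e.
  case: (eqVneq c 0) => hc.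
    apply: hn; right; right; split => //; move: e; rewrite hc mul0r => /eqP.
    by rewrite mulf_eq0 expf_eq0 (negbTE hq) andbF orbF => /eqP.
  case: (eqVneq d 0) => hd.
    apply: hn; right; right; split => //; move: e; rewrite hd mul0r => /eqP.
    by rewrite eq_sym mulf_eq0 expf_eq0 (negbTE hq) andbF orbF (negbTE hc).
  apply: hn; left; split => //; split => //.
  exists ((M.-1 - k)%N%:Z - k%:Z); split; first by apply/andP; split; lia.
  rewrite expfzDr // -exprnN.
  have hqk : q ^+ k != 0 by rewrite expf_neq0.
  apply: (mulIf hd); rewrite divfK //; apply: (mulIf hqk).
  by rewrite -e mulrAC divfK // mulrC.
apply: hn; right; left.
exists (- (M.-1)%:Z); split; first by apply/andP; split; lia.
rewrite -exprnN.
have hqk : q ^+ M.-1 != 0 by rewrite expf_neq0.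
apply: (mulIf hqk); rewrite mulVf // e; by [].
Qed.

End HH.

Theorem mainTheorem1 (R : realType) (N : nat) (q c d : R[i]) :
  (1 <= N)%N -> q != 0 ->
  is_basis_poly_deg_le
    (fun k : 'I_N.+1 => aw_monomial q c k * aw_monomial q d (N - k)) <->
  ~ ( (c != 0 /\ d != 0 /\
        exists i : int, (1 - N%:Z <= i <= N%:Z - 1)%R /\ c / d = q ^ i)
    \/ (exists i : int, (1 - N%:Z <= i <= 0)%R /\ c * d = q ^ i)
    \/ (c = 0 /\ d = 0) ).
Proof.
move=> hN hq.
rewrite -(good_iff hq c d hN) -span_good //.
have -> : (fun k : 'I_N.+1 => aw_monomial q c k * aw_monomial q d (N - k))
        = (fun k : 'I_N.+1 => Fam q N c d k) by [].
have hsz : forall k, (k <= N)%N -> (size (Fam q N c d k) <= N.+1)%N.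
  move=> k hk; exact: size_Fam.
split.
  case=> _ _ hS p hp; have [a' ->] := hS p hp.
  exists (fun n => a' (inord n)); apply: eq_bigr => k _; by rewrite inord_val.
move=> hS; have hI := span_indep hsz hS; split.
- move=> k; apply: hsz; by rewrite -ltnS.
- move=> a' ha k.
  have := hI (fun n => a' (inord n)).
  have -> : \sum_(k < N.+1) a' (inord k) *: Fam q N c d k = 0.
    apply: etrans ha; apply: eq_bigr => j _; by rewrite inord_val.
  move=> /(_ erefl k); rewrite inord_val; apply; by rewrite -ltnS.
- move=> p hp; have [a ->] := hS p hp.
  by exists (fun k : 'I_N.+1 => a k).
Qed.
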